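(* Let $\mathbf{E},\mathbf{F}$ be finite-dimensional Euclidean spaces, $\mathcal{K}\subset\mathbf{E}$ a proper cone, $\mathcal{A}:\mathbf{E}\to\mathbf{F}$ a surjective linear map, $b\in\mathbf{F}$, $c\in\mathbf{E}$, and consider the conic program (P) $\min\{\langle c,x\rangle:\mathcal{A}x=b,\ x\in\mathcal{K}\}$ with optimal value $p_\star$ and solution set $\mathcal{X}_\star$. Suppose primal and dual Slater's condition holds: there are $x_0\in\mathrm{int}(\mathcal{K})$ with $\mathcal{A}x_0=b$ and $y_0\in\mathbf{F}$ with $c-\mathcal{A}^*y_0\in\mathrm{int}(\mathcal{K}^* )$. For a perturbation $\Delta=(\Delta\mathcal{A},\Delta b,\Delta c)$ let (P') be $\min\{\langle c+\Delta c,x\rangle:(\mathcal{A}+\Delta\mathcal{A})x=b+\Delta b,\ x\in\mathcal{K}\}$ with solution set $\mathcal{X}_\star'$, and $\|\Delta\|=\|\Delta\mathcal{A}\|_{\mathrm{op}}+\|\Delta b\|_2+\|\Delta c\|_2$. Then for every sufficiently small $\varepsilon>0$ there is a constant $\bar c$ such that for all $\Delta$ with $\|\Delta\|\le\varepsilon$ and every optimal solution $x_\star'$ of (P'), $$\max\{\epsilon_{\mathrm{opt}}(x_\star'),\ \|\mathcal{A}(x_\star')-b\|_2\}\le\bar c\|\Delta\|.$$ Consequently, if there are constants $c_1,c_2,c_3\ge0$ and $p>0$ such that $\mathrm{dist}(x,\mathcal{X}_\star)^p\le c_1|\epsilon_{\mathrm{opt}}(x)|+c_2\|\mathcal{A}x-b\|_2+c_3\|x_-\|_2$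 for all $x\in\mathbf{E}$, then there are constants $c_1',c_2',c_3'\ge0$ such that for all such $\Delta$, $\mathrm{dist}(\mathcal{X}_\star,\mathcal{X}_\star')^{p}\le c_1'\|\Delta c\|_2+c_2'\|\Delta\mathcal{A}\|_{\mathrm{op}}+c_3'\|\Delta b\|_2$.
   Context: $\mathcal{K}^*$ is the dual cone of $\mathcal{K}$. $\epsilon_{\mathrm{opt}}(x)=\langle c,x\rangle-p_\star$ is suboptimality with respect to the original (unperturbed) data. $x_-=x-P_{\mathcal{K}}(x)$ with $P_{\mathcal{K}}$ the Euclidean projection onto $\mathcal{K}$. $\mathrm{dist}(x,\mathcal{X}_\star)=\inf_{z\in\mathcal{X}_\star}\|x-z\|_2$ and $\mathrm{dist}(\mathcal{X}_\star,\mathcal{X}_\star')=\inf_{x\in\mathcal{X}_\star,x'\in\mathcal{X}_\star'}\|x-x'\|_2$. $\|\cdot\|_{\mathrm{op}}$ is the operator norm of a linear map. *)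

(* Defs.v *)
(* Euclidean spaces E = R^n, F = R^m as
   column vectors with the standard inner product. *)
From HB Require Import structures.
From mathcomp Require Import all_boot all_order all_algebra.
From mathcomp Require Import all_classical all_reals all_analysis.
Set Implicit Arguments. Unset Strict Implicit. Unset Printing Implicit Defensive.
Import Order.TTheory GRing.Theory Num.Theory.
Local Open Scope classical_set_scope.
Local Open Scope ring_scope.

Section Conic.
Variable R : realType.

Definition dotv n (x y : 'cV[R]_n) : R := \sum_(i < n) x i 0 * y i 0.
Definition norm2 n (x : 'cV[R]_n) : R := Num.sqrt (dotv x x).

Definition opnorm m n (A : 'M[R]_(m, n)) : R :=
  sup [set norm2 (A *m x) | x in [set x : 'cV[R]_n | norm2 x <= 1]].

Definition interior2 n (K : set 'cV[R]_n) : set 'cV[R]_n :=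
  [set x | exists2 r : R, 0 < r & forall z, norm2 (z - x) < r -> K z].

Definition closed2 n (K : set 'cV[R]_n) : Prop :=
  forall x, (forall r : R, 0 < r -> exists2 z, K z & norm2 (z - x) < r) -> K x.

Definition proper_cone n (K : set 'cV[R]_n) : Prop :=
  K 0 /\
  (forall (t : R) x, 0 <= t -> K x -> K (t *: x)) /\
  (forall (t : R) x y, 0 <= t <= 1 -> K x -> K y -> K (t *: x + (1 - t) *: y)) /\
  closed2 K /\
  (forall x, K x -> K (- x) -> x = 0) /\
  (exists x, interior2 K x).

Definition dual_cone n (K : set 'cV[R]_n) : set 'cV[R]_n :=
  [set y | forall x, K x -> 0 <= dotv x y].

Definition feasible m n (K : set 'cV[R]_n) (A : 'M[R]_(m, n)) (b : 'cV[R]_m) :=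
  [set x | A *m x = b /\ K x].

Definition opt_value m n (K : set 'cV[R]_n) (A : 'M[R]_(m, n)) (b : 'cV[R]_m)
  (c : 'cV[R]_n) : R := inf [set dotv c x | x in feasible K A b].

Definition sol_set m n (K : set 'cV[R]_n) (A : 'M[R]_(m, n)) (b : 'cV[R]_m)
  (c : 'cV[R]_n) : set 'cV[R]_n :=
  [set x | feasible K A b x /\ forall z, feasible K A b z -> dotv c x <= dotv c z].

Definition eps_opt m n (K : set 'cV[R]_n) (A : 'M[R]_(m, n)) (b : 'cV[R]_m)
  (c : 'cV[R]_n) (x : 'cV[R]_n) : R := dotv c x - opt_value K A b c.

Definition projK n (K : set 'cV[R]_n) (x : 'cV[R]_n) : 'cV[R]_n :=
  xget 0 [set z | K z /\ forall w, K w -> norm2 (x - z) <= norm2 (x - w)].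
Definition xminus n (K : set 'cV[R]_n) (x : 'cV[R]_n) := x - projK K x.

(* distances as extended reals (inf over the empty set is +oo) *)
Definition dist_pt n (x : 'cV[R]_n) (X : set 'cV[R]_n) : \bar R :=
  ereal_inf [set (norm2 (x - z))%:E | z in X].
Definition dist_set n (X Y : set 'cV[R]_n) : \bar R :=
  ereal_inf [set (norm2 (x - y))%:E | x in X & y in Y].

End Conic.

(* Main.v *)
Require Import Defs.
From HB Require Import structures.
From mathcomp Require Import all_boot all_order all_algebra.
From mathcomp Require Import all_classical all_reals all_analysis.
From mathcomp Require Import ring lra.
Import Order.TTheory GRing.Theory Num.Theory.
Import numFieldNormedType.Exports.
Local Open Scope classical_set_scope.
Local Open Scope ring_scope.
Set Implicit Arguments. Unset Strict Implicit. Unset Printing Implicit Defensive.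
Section Basic.
Variable R : realType.
Implicit Types (n : nat).

Lemma dotvC n (x y : 'cV[R]_n) : dotv x y = dotv y x.
Proof. by rewrite /dotv; apply: eq_bigr => i _; rewrite mulrC. Qed.

Lemma dotvDl n (x y z : 'cV[R]_n) : dotv (x + y) z = dotv x z + dotv y z.
Proof. by rewrite /dotv -big_split; apply: eq_bigr => i _; rewrite !mxE mulrDl. Qed.

Lemma dotvZl n a (x z : 'cV[R]_n) : dotv (a *: x) z = a * dotv x z.
Proof. by rewrite /dotv mulr_sumr; apply: eq_bigr => i _; rewrite !mxE mulrA. Qed.

Lemma dotvNl n (x z : 'cV[R]_n) : dotv (- x) z = - dotv x z.
Proof. by rewrite -scaleN1r dotvZl mulN1r. Qed.

Lemma dotvBl n (x y z : 'cV[R]_n) : dotv (x - y) z = dotv x z - dotv y z.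
Proof. by rewrite dotvDl dotvNl. Qed.

Lemma dotvDr n (x y z : 'cV[R]_n) : dotv z (x + y) = dotv z x + dotv z y.
Proof. by rewrite !(dotvC z) dotvDl. Qed.
Lemma dotvZr n a (x z : 'cV[R]_n) : dotv z (a *: x) = a * dotv z x.
Proof. by rewrite !(dotvC z) dotvZl. Qed.
Lemma dotvNr n (x z : 'cV[R]_n) : dotv z (- x) = - dotv z x.
Proof. by rewrite !(dotvC z) dotvNl. Qed.
Lemma dotvBr n (x y z : 'cV[R]_n) : dotv z (x - y) = dotv z x - dotv z y.
Proof. by rewrite !(dotvC z) dotvBl. Qed.
Lemma dotv0l n (z : 'cV[R]_n) : dotv 0 z = 0.
Proof. by rewrite /dotv big1 // => i _; rewrite mxE mul0r. Qed.

Lemma dotv_ge0 n (x : 'cV[R]_n) : 0 <= dotv x x.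
Proof. by apply: sumr_ge0 => i _; rewrite -expr2 sqr_ge0. Qed.

Lemma dotv_eq0 n (x : 'cV[R]_n) : dotv x x = 0 -> x = 0.
Proof.
move=> /eqP; rewrite /dotv psumr_eq0 => [/allP H|i _]; last by rewrite -expr2 sqr_ge0.
apply/matrixP => i j; rewrite (ord1 j) mxE.
have /H : i \in index_enum 'I_n by rewrite mem_index_enum.
by rewrite /= mulf_eq0 orbb => /eqP.
Qed.

Lemma norm2_ge0 n (x : 'cV[R]_n) : 0 <= norm2 x.
Proof. exact: sqrtr_ge0. Qed.

Lemma norm2_sq n (x : 'cV[R]_n) : norm2 x ^+ 2 = dotv x x.
Proof. by rewrite sqr_sqrtr // dotv_ge0. Qed.

Lemma norm2_eq0 n (x : 'cV[R]_n) : norm2 x = 0 -> x = 0.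
Proof. by move=> h; apply: dotv_eq0; rewrite -norm2_sq h expr0n. Qed.

Lemma norm2_le0 n (x : 'cV[R]_n) : norm2 x <= 0 -> x = 0.
Proof. by move=> h; apply: norm2_eq0; apply/eqP; rewrite eq_le h norm2_ge0. Qed.

Lemma norm2_0 n : norm2 (0 : 'cV[R]_n) = 0.
Proof. by rewrite /norm2 dotv0l sqrtr0. Qed.

Lemma norm2Z n a (x : 'cV[R]_n) : norm2 (a *: x) = `|a| * norm2 x.
Proof.
by rewrite /norm2 dotvZl dotvZr mulrA -expr2 sqrtrM ?sqr_ge0 // sqrtr_sqr.
Qed.

Lemma norm2N n (x : 'cV[R]_n) : norm2 (- x) = norm2 x.
Proof. by rewrite -scaleN1r norm2Z normrN1 mul1r. Qed.

Lemma norm2B n (x y : 'cV[R]_n) : norm2 (x - y) = norm2 (y - x).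
Proof. by rewrite -norm2N opprB. Qed.

Lemma CS n (x y : 'cV[R]_n) : `|dotv x y| <= norm2 x * norm2 y.
Proof.
have [x0|xn0] := eqVneq (dotv x x) 0.
  by rewrite (dotv_eq0 x0) dotv0l normr0 mulr_ge0 // norm2_ge0.
have Xp : 0 < dotv x x by rewrite lt_def xn0 dotv_ge0.
set P := dotv x y; set X := dotv x x; set Y := dotv y y.
have h : 0 <= dotv ((- P / X) *: x + y) ((- P / X) *: x + y) by exact: dotv_ge0.
rewrite !(dotvDl, dotvDr, dotvZl, dotvZr) -/X -/Y (dotvC y x) -/P in h.
have h2 : P ^+ 2 <= X * Y.
  have : 0 <= X * (- P / X * (- P / X * X + P) + (- P / X * P + Y)).
    apply: mulr_ge0; [exact: ltW| apply: (le_trans h); rewrite le_eqVlt; apply/orP; left; apply/eqP; ring].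
  have key : forall X P Y : R, X != 0 ->
      X * (- P / X * (- P / X * X + P) + (- P / X * P + Y)) = X * Y - P ^+ 2.
    by move=> X' P' Y' hX; field.
  rewrite key ?gt_eqF //.
  by rewrite subr_ge0.
rewrite -sqrtr_sqr /norm2 -sqrtrM ?dotv_ge0 //.
by rewrite ler_sqrt // mulr_ge0 // ?dotv_ge0 // ltW.
Qed.

Lemma dotv_le n (x y : 'cV[R]_n) : dotv x y <= norm2 x * norm2 y.
Proof. exact: le_trans (ler_norm _) (CS x y). Qed.
Lemma dotv_ge n (x y : 'cV[R]_n) : - (norm2 x * norm2 y) <= dotv x y.
Proof. by rewrite lerNl; apply: le_trans (CS x y); rewrite -normrN ler_norm. Qed.

Lemma norm2D n (x y : 'cV[R]_n) : norm2 (x + y) <= norm2 x + norm2 y.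
Proof.
rewrite -(ler_pXn2r (n:=2)) ?nnegrE ?addr_ge0 ?norm2_ge0 //.
rewrite norm2_sq dotvDl !dotvDr (dotvC y x) sqrrD !norm2_sq.
have := dotv_le x y; lra.
Qed.

Lemma norm2_coord n (x : 'cV[R]_n) i : `|x i 0| <= norm2 x.
Proof.
rewrite -(ler_pXn2r (n:=2)) ?nnegrE ?norm2_ge0 // norm2_sq real_normK ?num_real //.
rewrite /dotv (bigD1 i) //= -expr2 lerDl.
by apply: sumr_ge0 => j _; rewrite -expr2 sqr_ge0.
Qed.

Lemma norm2_le_sum n (x : 'cV[R]_n) : norm2 x <= \sum_i `|x i 0|.
Proof.
have S0 : 0 <= \sum_i `|x i 0| by apply: sumr_ge0.
rewrite -(ler_pXn2r (n:=2)) ?nnegrE ?norm2_ge0 // norm2_sq expr2 /dotv mulr_sumr.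
apply: ler_sum => i _.
rewrite -[x i 0 * x i 0]real_normK ?num_real // expr2; apply: ler_wpM2r => //.
by rewrite (bigD1 i) //= lerDl sumr_ge0.
Qed.

Lemma dotv_tr m n (A : 'M[R]_(m, n)) x y : dotv x (A^T *m y) = dotv (A *m x) y.
Proof.
rewrite /dotv.
under eq_bigr => i _ do rewrite mxE mulr_sumr.
rewrite exchange_big /=; apply: eq_bigr => j _; rewrite mxE mulr_suml.
by apply: eq_bigr => i _; rewrite mxE; ring.
Qed.

End Basic.
Section Mx.
Variable R : realType.

Lemma mx_bound m n (M : 'M[R]_(m, n)) :
  exists C, 0 <= C /\ forall x, norm2 (M *m x) <= C * norm2 x.
Proof.
exists (\sum_i norm2 (row i M)^T); split; first by apply: sumr_ge0 => i _; exact: norm2_ge0.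
move=> x; apply: le_trans (norm2_le_sum _) _; rewrite mulr_suml; apply: ler_sum => i _.
have -> : (M *m x) i 0 = dotv (row i M)^T x.
  by rewrite mxE /dotv; apply: eq_bigr => j _; rewrite !mxE.
exact: CS.
Qed.

Lemma opnorm_ub m n (M : 'M[R]_(m, n)) x : norm2 x <= 1 -> norm2 (M *m x) <= opnorm M.
Proof.
move=> hx; have [C [C0 HC]] := mx_bound M.
apply: sup_upper_bound; last by exists x.
split; first by exists (norm2 (M *m x)), x.
exists C => _ [y /= hy <-]; apply: le_trans (HC y) _.
by rewrite -[leRHS]mulr1 ler_wpM2l.
Qed.

Lemma opnorm_ge0 m n (M : 'M[R]_(m, n)) : 0 <= opnorm M.
Proof.
apply: le_trans (opnorm_ub M (x := 0) _); first exact: norm2_ge0.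
by rewrite norm2_0.
Qed.

Lemma opnorm_bound m n (M : 'M[R]_(m, n)) x : norm2 (M *m x) <= opnorm M * norm2 x.
Proof.
have [x0|xn0] := eqVneq (norm2 x) 0.
  by rewrite (norm2_eq0 x0) mulmx0 !norm2_0 mulr0.
have xp : 0 < norm2 x by rewrite lt_def xn0 norm2_ge0.
have := opnorm_ub M (x := (norm2 x)^-1 *: x).
rewrite norm2Z ger0_norm ?invr_ge0 ?norm2_ge0 // mulVf // lexx => /(_ isT).
rewrite -scalemxAr norm2Z ger0_norm ?invr_ge0 ?norm2_ge0 //.
move=> h.
have -> : norm2 (M *m x) = norm2 x * ((norm2 x)^-1 * norm2 (M *m x)).
  by rewrite mulrA mulfV // mul1r.
rewrite mulrC; apply: ler_wpM2r => //; exact: ltW.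
Qed.

Lemma right_inv m n (A : 'M[R]_(m, n)) :
  (forall y : 'cV[R]_m, exists x : 'cV[R]_n, A *m x = y) ->
  exists B : 'M[R]_(n, m), A *m B = 1%:M.
Proof.
move=> hs.
pose f (j : 'I_m) := projT1 (cid (hs (delta_mx j 0))).
have hf j : A *m f j = delta_mx j 0 by rewrite /f; case: cid.
exists (\matrix_(k, j) f j k 0); apply/matrixP => i j.
have := congr1 (fun M : 'cV[R]_m => M i 0) (hf j); rewrite !mxE eqxx andbT => <-.
by apply: eq_bigr => k _; rewrite !mxE.
Qed.

Lemma solveL m n (A dA : 'M[R]_(m, n)) (B : 'M[R]_(n, m)) beta :
  A *m B = 1%:M -> 0 <= beta -> (forall y, norm2 (B *m y) <= beta * norm2 y) ->
  beta * opnorm dA <= 1/2 ->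
  forall w, exists u, (A + dA) *m u = w /\ norm2 u <= 2 * beta * norm2 w.
Proof.
move=> AB b0 hB hsmall w.
pose M : 'M[R]_m := 1%:M + dA *m B.
have AdB : (A + dA) *m B = M by rewrite mulmxDl AB.
have small (v : 'cV[R]_m) : norm2 (dA *m B *m v) <= norm2 v / 2.
  rewrite -mulmxA; apply: le_trans (opnorm_bound _ _) _.
  apply: (@le_trans _ _ (opnorm dA * (beta * norm2 v))).
    by apply: ler_wpM2l; [exact: opnorm_ge0| exact: hB].
  by rewrite mulrA [opnorm dA * beta]mulrC; have := norm2_ge0 v; nra.
have inj (v : 'cV[R]_m) : M *m v = 0 -> v = 0.
  move=> hv; apply: (@norm2_le0 R m v).
  have e : v = - (dA *m B *m v) by apply/eqP; rewrite -addr_eq0 -{1}[v]mul1mx -mulmxDl; apply/eqP; exact: hv.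
  have := small v; rewrite -norm2N -e; have := norm2_ge0 v; lra.
have Mu : M \in unitmx.
  rewrite -unitmx_tr -row_free_unit -kermx_eq0; apply/eqP/row_matrixP => i.
  rewrite row0; set r := row i _.
  have hr : r *m M^T = 0 by rewrite /r -row_mul mulmx_ker row0.
  have : M *m r^T = 0 by rewrite -[M]trmxK -trmx_mul hr trmx0.
  by move/inj => /(congr1 trmx); rewrite trmxK trmx0.
pose v := invmx M *m w.
have Mv : M *m v = w by rewrite /v mulmxA mulmxV // mul1mx.
exists (B *m v); split; first by rewrite mulmxA AdB.
have hv : norm2 v <= 2 * norm2 w.
  have e : v = w - dA *m B *m v by rewrite -Mv mulmxDl mul1mx addrK.
  have := norm2D w (- (dA *m B *m v)); rewrite norm2N -e.
  have := small v; lra.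
apply: le_trans (hB _) _; rewrite -mulrA mulrCA; apply: ler_wpM2l => //.
Qed.

End Mx.
Section Topo.
Variable R : realType.
Variable n : nat.

Lemma le0_of_small (a k : R) : 0 <= k -> (forall r, 0 < r -> a <= k * r) -> a <= 0.
Proof.
move=> k0 h; rewrite leNgt; apply/negP => ap.
have kp : 0 < k + 1 by lra.
have := h (a / (k + 1)) (divr_gt0 ap kp).
rewrite mulrA ler_pdivlMr // => h2.
have : a * (k + 1) <= k * a by [].
nra.
Qed.

Lemma sum_small (x : 'cV[R]_n) e : (forall i, `|x i 0| < e) -> norm2 x <= n%:R * e.
Proof.
move=> h; apply: le_trans (norm2_le_sum _) _.
have -> : n%:R * e = \sum_(i < n) e by rewrite sumr_const card_ord mulr_natl.
by apply: ler_sum => i _; apply: ltW.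
Qed.

Lemma approx (S : set 'rV[R]_n) p : closure S p ->
  forall r, 0 < r -> exists v, S v /\ norm2 (v^T - p^T) < r.
Proof.
move=> cl r rp.
have np : 0 < n%:R + 1 :> R by rewrite ltr_pwDr // ler0n.
pose e := r / (n%:R + 1).
have ep : 0 < e by rewrite divr_gt0.
have [v [Sv [_ hv]]] := cl _ (nbhsx_ballx p e ep).
exists v; split => //.
apply: le_lt_trans (sum_small (e := e) _) _.
  move=> i; have := hv 0 i; rewrite /ball /= !mxE => H.
  by rewrite distrC.
rewrite /e mulrA ltr_pdivrMr //; have := ler0n R n; nra.
Qed.

Lemma dot_continuous (c : 'cV[R]_n) : continuous (fun v : 'rV[R]_n => dotv c v^T).
Proof.
move=> /= M s /= /(nbhs_ballP (dotv c M^T)) [e e0 es].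
have np : 0 < (norm2 c + 1) * (n%:R + 1).
  by rewrite mulr_gt0 // ltr_pwDr // ?ler0n ?norm2_ge0.
apply/nbhs_ballP; exists (e / ((norm2 c + 1) * (n%:R + 1))); first by apply: divr_gt0.
move=> N [_ MN]; apply: es.
rewrite /ball /= -dotvBr.
have hN : norm2 (M^T - N^T) <= n%:R * (e / ((norm2 c + 1) * (n%:R + 1))).
  apply: sum_small => i; have := MN 0 i; rewrite /ball /= !mxE.
  by [].
apply: le_lt_trans (CS _ _) _.
have := ler_wpM2l (norm2_ge0 c) hN.
move=> h; apply: le_lt_trans h _.
rewrite mulrA mulrA ltr_pdivrMr //.
have h1 : 0 < e * (norm2 c + n%:R + 1).
  by apply: mulr_gt0 => //; have := norm2_ge0 c; have := ler0n R n; lra.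
lra.
Qed.

Lemma rV_bounded (S : set 'rV[R]_n) B : (forall v, S v -> norm2 v^T <= B) -> bounded_set S.
Proof.
move=> h; exists B; split; first exact: num_real.
move=> M hM v /= Sv.
have -> : `|v| = mx_norm v by [].
rewrite mx_normrE.
elim/big_ind: _ => //.
- by apply: le_trans (norm2_ge0 v^T) _; apply: le_trans (h v Sv) _; apply: ltW.
- by move=> x y hx hy; rewrite ge_max hx hy.
- move=> [i j] _ /=; rewrite (ord1 i).
  apply: le_trans (ltW hM); apply: le_trans (h v Sv).
  by have := norm2_coord v^T j; rewrite mxE.
Qed.

End Topo.
Section Cone.
Variable R : realType.
Variables (m n : nat) (K : set 'cV[R]_n) (A : 'M[R]_(m, n)) (b : 'cV[R]_m) (c : 'cV[R]_n).
Hypothesis hK : proper_cone K.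
Variables (x0 : 'cV[R]_n) (r0 : R).
Hypothesis r0p : 0 < r0.
Hypothesis hx0 : forall z, norm2 (z - x0) < r0 -> K z.
Hypothesis Ax0 : A *m x0 = b.
Variables (y0 : 'cV[R]_m) (r1 : R).
Hypothesis r1p : 0 < r1.
Hypothesis hy0 : forall z, norm2 (z - (c - A^T *m y0)) < r1 -> dual_cone K z.

Let s0 := c - A^T *m y0.

Lemma K_comb x y t : K x -> K y -> 0 <= t <= 1 -> K ((1 - t) *: x + t *: y).
Proof.
case: hK => _ [_ [hc _]] Kx Ky /andP[t0 t1].
have e : 1 - (1 - t) = t by ring.
have := hc (1 - t) x y; rewrite e; apply => //.
by apply/andP; split; lra.
Qed.

Lemma K_x0 : K x0.
Proof. by apply: hx0; rewrite subrr norm2_0. Qed.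

Lemma ballL x t u : K x -> 0 <= t <= 1 -> norm2 u <= t * r0 / 2 ->
  K ((1 - t) *: x + t *: x0 + u).
Proof.
move=> Kx /andP[t0 t1] hu.
have [te|tn0] := eqVneq t 0.
  rewrite te in hu *.
  have u0 : u = 0 by apply: norm2_le0; move: hu; rewrite !mul0r.
  by rewrite u0 addr0 scale0r addr0 subr0 scale1r.
have tp : 0 < t by rewrite lt_def tn0 t0.
have Kz : K (x0 + t^-1 *: u).
  apply: hx0; rewrite (addrC x0) addrK norm2Z ger0_norm ?invr_ge0 //.
  rewrite mulrC ltr_pdivrMr //; apply: le_lt_trans hu _; rewrite [r0 * t]mulrC; have := mulr_gt0 tp r0p; lra.
have := K_comb Kx Kz (t := t); rewrite t0 t1 => /(_ isT).
by rewrite scalerDr scalerA mulfV // scale1r addrA.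
Qed.

Lemma coercive x : K x -> r1 / 2 * norm2 x <= dotv x s0.
Proof.
move=> Kx.
have [x0'|xn0] := eqVneq (norm2 x) 0.
  by rewrite (norm2_eq0 x0') norm2_0 mulr0 dotv0l.
have xp : 0 < norm2 x by rewrite lt_def xn0 norm2_ge0.
have hz : dual_cone K (s0 - (r1 / 2 / norm2 x) *: x).
  apply: hy0; rewrite -/s0 addrC addKr norm2N norm2Z ger0_norm; last first.
    by rewrite divr_ge0 // ?norm2_ge0 // divr_ge0 // ltW.
  rewrite divfK ?gt_eqF //; have := r1p; lra.
have := hz x Kx; rewrite dotvBr dotvZr -norm2_sq.
have -> : r1 / 2 / norm2 x * norm2 x ^+ 2 = r1 / 2 * norm2 x.
  by rewrite expr2 mulrA mulrAC -(mulrA _ _^-1) mulVf // mulr1.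
lra.
Qed.

Lemma dotc x : dotv c x = dotv x s0 + dotv (A *m x) y0.
Proof. by rewrite /s0 dotvBr dotv_tr dotvC subrK. Qed.

Lemma projK_in x : K x -> Defs.projK K x = x.
Proof.
move=> Kx; apply: xget_unique; first by split => // w _; rewrite subrr norm2_0 norm2_ge0.
move=> y [_ /(_ x Kx)]; rewrite subrr norm2_0 => h.
by apply/eqP; rewrite eq_sym -subr_eq0; apply/eqP/norm2_le0.
Qed.

Lemma feas_lb x : feasible K A b x -> dotv b y0 <= dotv c x.
Proof.
move=> [Axb Kx]; rewrite dotc Axb lerDr.
apply: le_trans (coercive Kx); apply: mulr_ge0; [have := r1p; lra|exact: norm2_ge0].
Qed.

Let pstar := opt_value K A b c.

Lemma pstar_le x : feasible K A b x -> pstar <= dotv c x.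
Proof.
move=> fx; apply: ge_inf; last by exists x.
by exists (dotv b y0) => _ [z fz <-]; exact: feas_lb.
Qed.

Lemma pstar_ge v : (forall x, feasible K A b x -> v <= dotv c x) -> v <= pstar.
Proof.
move=> h; apply: lb_le_inf; first by exists (dotv c x0), x0 => //; split=> //; exact: K_x0.
by move=> _ [z fz <-]; exact: h.
Qed.

Ltac pos := repeat first [ exact: norm2_ge0 | exact: normr_ge0 | exact: ler0n | exact: ler01 | assumption
  | apply: addr_ge0 | apply: divr_ge0 | apply: mulr_ge0 | rewrite invr_ge0 | rewrite invr_gt0 | apply: ltW | done ].

Variables (B : 'M[R]_(n, m)) (beta : R).
Hypothesis AB : A *m B = 1%:M.
Hypothesis beta0 : 0 <= beta.
Hypothesis hB : forall y, norm2 (B *m y) <= beta * norm2 y.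

Local Notation N0 := (norm2 x0).
Local Notation rho := (r1 / 2).
Let R2 := N0 + `|dotv c x0 - dotv b y0| / rho.
Let kap := 4 * beta * (1 + R2) / r0 + 1.
Let Dc := kap * (N0 + R2) + 2 * beta * (1 + R2).
Let M2 := (norm2 c + 1) * (R2 + Dc) + `|dotv b y0| + norm2 y0.
Let Rx := 2 * M2 / rho.
Let E := norm2 c * Dc + R2 + Dc + Rx.
Let Cres := 1 + Rx.
Let kap' := 2 * beta * Cres / r0 + 1.
Let D' := kap' * (N0 + Rx) + beta * Cres.
Definition eps0c := Num.min 1 (Num.min (1 / (2 * beta + 1))
  (Num.min (1 / kap) (Num.min (1 / kap') (rho / (2 * (1 + norm2 y0)))))).

Let rhop : 0 < rho. Proof. have := r1p; lra. Qed.
Let N0ge : 0 <= N0. Proof. exact: norm2_ge0. Qed.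
Let R2ge : N0 <= R2.
Proof. by rewrite /R2 lerDl; pos. Qed.
Let R2ge0 : 0 <= R2. Proof. exact: le_trans R2ge. Qed.
Let kapp : 0 < kap.
Proof. rewrite /kap; have : 0 <= 4 * beta * (1 + R2) / r0; last lra.
by pos. Qed.
Let kapr0 : 2 * beta * (1 + R2) <= kap * r0 / 2.
Proof.
have e : kap * r0 = 4 * beta * (1 + R2) + r0 by rewrite /kap mulrDl mul1r divfK ?gt_eqF.
rewrite e.
have := r0p; have : 0 <= beta * (1 + R2) by pos.
lra.
Qed.
Let Dcge : 0 <= Dc.
Proof. by rewrite /Dc; pos. Qed.
Let M2ge : 0 <= M2.
Proof. by rewrite /M2; pos. Qed.
Let Rxge : 0 <= Rx.
Proof. by rewrite /Rx; pos. Qed.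
Let kap'p : 0 < kap'.
Proof. rewrite /kap'; have : 0 <= 2 * beta * Cres / r0; last lra.
by pos. Qed.
Let kap'r0 : beta * Cres <= kap' * r0 / 2.
Proof.
have e : kap' * r0 = 2 * beta * Cres + r0 by rewrite /kap' mulrDl mul1r divfK ?gt_eqF.
rewrite e.
have := r0p; have : 0 <= beta * Cres by rewrite /Cres; pos.
lra.
Qed.

Lemma eps0c_gt0 : 0 < eps0c.
Proof.
have h1 : 0 < 2 * beta + 1 by have := beta0; lra.
have h2 : 0 < 2 * (1 + norm2 y0) by have := norm2_ge0 y0; lra.
by rewrite /eps0c !lt_min ltr01 !divr_gt0.
Qed.

Lemma le_div_mul (k d a : R) : 0 < k -> d <= a / k -> k * d <= a.
Proof.
move=> kp h; have := ler_wpM2l (ltW kp) h.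
by rewrite mulrCA mulfV ?gt_eqF // mulr1.
Qed.

Lemma small_facts d : 0 <= d -> d <= eps0c ->
  [/\ d <= 1, beta * d <= 1/2, kap * d <= 1, kap' * d <= 1 &
      (1 + norm2 y0) * d <= rho / 2].
Proof.
move=> d0; rewrite /eps0c !le_min => /and5P[d1 db dk dk' dy].
have hb : 0 < 2 * beta + 1 by have := beta0; lra.
have hy : 0 < 2 * (1 + norm2 y0) by have := norm2_ge0 y0; lra.
split => //.
- have := le_div_mul hb db; lra.
- exact: le_div_mul.
- exact: le_div_mul.
- have := le_div_mul hy dy; lra.
Qed.

Lemma comb_sub (x y : 'cV[R]_n) t : (1 - t) *: x + t *: y - x = t *: (y - x).
Proof. by apply/matrixP => i j; rewrite !mxE; ring. Qed.

Lemma norm2_comb (x y : 'cV[R]_n) t : 0 <= t <= 1 ->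
  norm2 ((1 - t) *: x + t *: y) <= (1 - t) * norm2 x + t * norm2 y.
Proof.
move=> /andP[t0 t1]; apply: le_trans (norm2D _ _) _.
by rewrite !norm2Z !ger0_norm //; lra.
Qed.

Lemma A_comb (x : 'cV[R]_n) t : A *m x = b -> A *m ((1 - t) *: x + t *: x0) = b.
Proof. by move=> Ax; rewrite mulmxDr -!scalemxAr Ax Ax0 -scalerDl subrK scale1r. Qed.

Lemma feasD x dA db d : K x -> A *m x = b -> norm2 x <= R2 ->
  0 <= d -> d <= eps0c -> opnorm dA <= d -> norm2 db <= d ->
  exists xt, feasible K (A + dA) (b + db) xt /\ norm2 (xt - x) <= Dc * d.
Proof.
move=> Kx Ax nx d0 de hA hb.
have [d1 bd kd _ _] := small_facts d0 de.
pose t := kap * d.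
have t01 : 0 <= t <= 1 by apply/andP; split => //; rewrite /t mulr_ge0 // ltW.
pose xt := (1 - t) *: x + t *: x0.
have Axt : A *m xt = b by exact: A_comb.
have nxt : norm2 xt <= R2.
  apply: le_trans (norm2_comb _ _ t01) _.
  case/andP: t01 => t0 t1.
  have := ler_wpM2l t0 R2ge; have : (1 - t) * norm2 x <= (1 - t) * R2 by apply: ler_wpM2l => //; lra.
  lra.
have hsm : beta * opnorm dA <= 1/2 by apply: le_trans bd; exact: ler_wpM2l.
pose w := b + db - (A + dA) *m xt.
have ew : w = db - dA *m xt by rewrite /w mulmxDl Axt opprD addrA [b + db]addrC addrK.
have nw : norm2 w <= d * (1 + R2).
  rewrite ew; apply: le_trans (norm2D _ _) _; rewrite norm2N.
  have := opnorm_bound dA xt; have := opnorm_ge0 dA.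
  have : opnorm dA * norm2 xt <= d * R2 by exact: (ler_pM (opnorm_ge0 dA) (norm2_ge0 xt) hA nxt).
  lra.
have [u [hu nu]] := solveL AB beta0 hB hsm w.
have nu' : norm2 u <= 2 * beta * (1 + R2) * d.
  apply: le_trans nu _.
  have b2 : 0 <= 2 * beta by have := beta0; lra.
  have := ler_wpM2l b2 nw; lra.
exists (xt + u); split.
  split.
    by rewrite mulmxDr hu /w addrC subrK.
  apply: ballL => //; apply: le_trans nu' _.
  have := ler_wpM2r d0 kapr0; rewrite /t; lra.
rewrite addrAC /xt comb_sub; apply: le_trans (norm2D _ _) _.
rewrite norm2Z ger0_norm; last by case/andP: t01.
have : norm2 (x0 - x) <= N0 + R2.
  by apply: le_trans (norm2D _ _) _; rewrite norm2N; lra.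
rewrite /t /Dc => hn.
have := ler_wpM2l (mulr_ge0 (ltW kapp) d0) hn.
lra.
Qed.

Lemma boundB dA db dc d xt z : 0 <= d -> d <= eps0c ->
  opnorm dA <= d -> norm2 db <= d -> norm2 dc <= d ->
  feasible K (A + dA) (b + db) xt -> norm2 (xt - x0) <= Dc * d ->
  feasible K (A + dA) (b + db) z -> dotv (c + dc) z <= dotv (c + dc) xt ->
  norm2 z <= Rx.
Proof.
move=> d0 de hA hb hc _ hxt [Az Kz] hz.
have [d1 _ _ _ dy] := small_facts d0 de.
have nz0 := norm2_ge0 z; have ny0 := norm2_ge0 y0.
have nxt : norm2 xt <= R2 + Dc.
  have -> : xt = (xt - x0) + x0 by rewrite subrK.
  apply: le_trans (norm2D _ _) _.
  have : Dc * d <= Dc by rewrite -[leRHS]mulr1; apply: ler_wpM2l.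
  have := R2ge; lra.
have h1 := coercive (Kz).
have h2 := dotc z.
have eAz : A *m z = b + db - dA *m z by rewrite -Az mulmxDl addrK.
have h3 : dotv (A *m z) y0 = dotv b y0 + dotv db y0 - dotv (dA *m z) y0.
  by rewrite eAz dotvBl dotvDl.
have h4 : dotv c z = dotv (c + dc) z - dotv dc z by rewrite dotvDl addrK.
have h5 : dotv (c + dc) xt <= (norm2 c + 1) * (R2 + Dc).
  apply: le_trans (dotv_le _ _) _; apply: ler_pM; rewrite ?norm2_ge0 //.
  by apply: le_trans (norm2D _ _) _; lra.
have h6 : - dotv dc z <= d * norm2 z.
  rewrite -dotvNl; apply: le_trans (dotv_le _ _) _; rewrite norm2N.
  exact: ler_wpM2r.
have h7 : - dotv db y0 <= norm2 y0.
  rewrite -dotvNl; apply: le_trans (dotv_le _ _) _; rewrite norm2N.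
  by rewrite -[leRHS]mul1r; apply: ler_wpM2r => //; lra.
have h8 : dotv (dA *m z) y0 <= norm2 y0 * (d * norm2 z).
  apply: le_trans (dotv_le _ _) _; rewrite mulrC; apply: ler_wpM2l => //.
  apply: le_trans (opnorm_bound _ _) _; exact: ler_wpM2r.
have h9 : - dotv b y0 <= `|dotv b y0| by rewrite -normrN ler_norm.
have h10 : (1 + norm2 y0) * d * norm2 z <= rho / 2 * norm2 z by exact: ler_wpM2r.
have key : rho / 2 * norm2 z <= M2.
  rewrite /M2; lra.
rewrite /Rx ler_pdivlMr; last by have := r1p; lra.
lra.
Qed.

Lemma resC dA db d z : 0 <= d -> opnorm dA <= d -> norm2 db <= d ->
  (A + dA) *m z = b + db -> norm2 z <= Rx -> norm2 (A *m z - b) <= Cres * d.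
Proof.
move=> d0 hA hb Az nz.
have -> : A *m z - b = db - dA *m z by rewrite -[A *m z](addrK (dA *m z)) -mulmxDl Az; 
  apply/matrixP => i j; rewrite !mxE; ring.
apply: le_trans (norm2D _ _) _; rewrite norm2N.
have := opnorm_bound dA z.
have : opnorm dA * norm2 z <= d * Rx by exact: (ler_pM (opnorm_ge0 dA) (norm2_ge0 z) hA nz).
rewrite /Cres; lra.
Qed.

Lemma upD dA db dc d xs : 0 <= d -> d <= eps0c ->
  opnorm dA <= d -> norm2 db <= d -> norm2 dc <= d ->
  sol_set K (A + dA) (b + db) (c + dc) xs -> dotv c xs <= pstar + E * d.
Proof.
move=> d0 de hA hb hc [fxs oxs].
have [d1 _ _ _ _] := small_facts d0 de.
have [xt0 [fxt0 hxt0]] := feasD K_x0 Ax0 R2ge d0 de hA hb.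
have nxs := boundB d0 de hA hb hc fxt0 hxt0 fxs (oxs xt0 fxt0).
have nc0 := norm2_ge0 c.
have claim x : feasible K A b x -> dotv c x <= dotv c x0 -> dotv c xs <= dotv c x + E * d.
  move=> [Ax Kx] hx.
  have nx : norm2 x <= R2.
    have h1 := coercive Kx; have h2 := dotc x; rewrite Ax in h2.
    have h3 : dotv c x0 - dotv b y0 <= `|dotv c x0 - dotv b y0| by exact: ler_norm.
    have : norm2 x <= `|dotv c x0 - dotv b y0| / rho.
      rewrite ler_pdivlMr; last by have := r1p; lra.
      lra.
    rewrite /R2; have := norm2_ge0 x0; lra.
  have [xt [fxt hxt]] := feasD Kx Ax nx d0 de hA hb.
  have o := oxs xt fxt.
  have h4 : - dotv dc xs <= d * Rx.
    rewrite -dotvNl; apply: le_trans (dotv_le _ _) _; rewrite norm2N.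
    exact: (ler_pM (norm2_ge0 _) (norm2_ge0 _) hc nxs).
  have h5 : dotv c (xt - x) <= norm2 c * (Dc * d).
    by apply: le_trans (dotv_le _ _) _; apply: ler_wpM2l.
  have nxt : norm2 xt <= R2 + Dc.
    have -> : xt = (xt - x) + x by rewrite subrK.
    apply: le_trans (norm2D _ _) _.
    have : Dc * d <= Dc by rewrite -[leRHS]mulr1; apply: ler_wpM2l.
    lra.
  have h6 : dotv dc xt <= d * (R2 + Dc).
    apply: le_trans (dotv_le _ _) _.
    exact: (ler_pM (norm2_ge0 _) (norm2_ge0 _) hc nxt).
  move: o; rewrite !dotvDl dotvBr in h5 *.
  rewrite /E; lra.
have c0 := claim x0 (conj Ax0 K_x0) (lexx _).
suff : dotv c xs - E * d <= pstar by lra.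
apply: pstar_ge => x fx.
have [hx|hx] := leP (dotv c x) (dotv c x0).
  by have := claim x fx hx; lra.
lra.
Qed.

Lemma lowE dA db dc d xs : 0 <= d -> d <= eps0c ->
  opnorm dA <= d -> norm2 db <= d -> norm2 dc <= d ->
  sol_set K (A + dA) (b + db) (c + dc) xs -> pstar <= dotv c xs + norm2 c * D' * d.
Proof.
move=> d0 de hA hb hc [fxs oxs].
have [d1 _ _ kd _] := small_facts d0 de.
have [xt0 [fxt0 hxt0]] := feasD K_x0 Ax0 R2ge d0 de hA hb.
have nxs := boundB d0 de hA hb hc fxt0 hxt0 fxs (oxs xt0 fxt0).
have [Axs Kxs] := fxs.
have res := resC d0 hA hb Axs nxs.
pose t := kap' * d.
have t01 : 0 <= t <= 1 by apply/andP; split => //; rewrite /t mulr_ge0 // ltW.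
have [t0 t1] : 0 <= t /\ t <= 1 by case/andP: t01.
pose xt := (1 - t) *: xs + t *: x0.
pose w := b - A *m xt.
have ew : w = (1 - t) *: (b - A *m xs).
  rewrite /w /xt mulmxDr -!scalemxAr Ax0.
  by apply/matrixP => i j; rewrite !mxE; ring.
have nw : norm2 w <= Cres * d.
  rewrite ew norm2Z ger0_norm ?subr_ge0 // norm2B.
  have := norm2_ge0 (A *m xs - b); have := ler_wpM2r (norm2_ge0 (A *m xs - b)) t0.
  lra.
pose u := B *m w.
have nu : norm2 u <= beta * Cres * d.
  apply: le_trans (hB _) _; rewrite -mulrA; exact: ler_wpM2l.
have Axt : A *m (xt + u) = b.
  by rewrite mulmxDr /u mulmxA AB mul1mx /w addrC subrK.
have Kxt : K (xt + u).
  apply: ballL => //; apply: le_trans nu _.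
  have := ler_wpM2r d0 kap'r0; rewrite /t; lra.
have hd : norm2 (xt + u - xs) <= D' * d.
  rewrite addrAC /xt comb_sub; apply: le_trans (norm2D _ _) _.
  rewrite norm2Z ger0_norm //.
  have : norm2 (x0 - xs) <= N0 + Rx.
    by apply: le_trans (norm2D _ _) _; rewrite norm2N; lra.
  move=> hn; have := ler_wpM2l (mulr_ge0 (ltW kap'p) d0) hn.
  rewrite /t /D'; lra.
have p1 := pstar_le (conj Axt Kxt).
have : dotv c (xt + u - xs) <= norm2 c * (D' * d).
  by apply: le_trans (dotv_le _ _) _; apply: ler_wpM2l => //; exact: norm2_ge0.
rewrite dotvBr; lra.
Qed.

Lemma existF dA db dc d : 0 <= d -> d <= eps0c ->
  opnorm dA <= d -> norm2 db <= d -> norm2 dc <= d ->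
  exists xs, sol_set K (A + dA) (b + db) (c + dc) xs.
Proof.
move=> d0 de hA hb hc.
have [xt0 [fxt0 hxt0]] := feasD K_x0 Ax0 R2ge d0 de hA hb.
pose S : set 'rV[R]_n := [set v | feasible K (A + dA) (b + db) v^T /\
   dotv (c + dc) v^T <= dotv (c + dc) xt0].
have S0 : S !=set0 by exists xt0^T; rewrite /S /= trmxK.
have bS : bounded_set S.
  apply: (@rV_bounded _ _ _ Rx) => v [fv hv].
  exact: boundB d0 de hA hb hc fxt0 hxt0 fv hv.
have cS : closed S.
  move=> p cl; have ap := approx cl.
  have Kp : K p^T.
    case: hK => [_ [_ [_ [hcl _]]]]; apply: hcl => r rp.
    by have [v [[[_ Kv] _] hv]] := ap r rp; exists v^T.
  have Ap : (A + dA) *m p^T = b + db.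
    have [C [C0 HC]] := mx_bound (A + dA).
    apply/eqP; rewrite -subr_eq0; apply/eqP/norm2_le0.
    apply: (le0_of_small C0) => r rp.
    have [v [[[Av _] _] hv]] := ap r rp.
    have -> : (A + dA) *m p^T - (b + db) = (A + dA) *m (p^T - v^T) by rewrite mulmxBr Av.
    apply: le_trans (HC _) _; apply: ler_wpM2l => //; rewrite norm2B; exact: ltW.
  split; first by split.
  rewrite -subr_le0; apply: (le0_of_small (norm2_ge0 (c + dc))) => r rp.
  have [v [[_ hv1] hv]] := ap r rp.
  have : dotv (c + dc) (p^T - v^T) <= norm2 (c + dc) * r.
    apply: le_trans (dotv_le _ _) _; apply: ler_wpM2l; first exact: norm2_ge0.
    by rewrite norm2B; exact: ltW.
  rewrite dotvBr; lra.
have cpS : compact S by exact: bounded_closed_compact.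
have [vs vsS hmin] := compact_EVT_min S0 cpS
  (continuous_subspaceT (@dot_continuous _ _ (c + dc))).
have [fvs hvs] : S vs by rewrite inE in vsS.
exists vs^T; split => // z fz.
have [hz|hz] := leP (dotv (c + dc) z) (dotv (c + dc) xt0).
  have := hmin z^T; rewrite /= trmxK; apply; rewrite inE /S /= trmxK; by split.
lra.
Qed.

Lemma main_in : exists C1 C2 : R, [/\ 0 <= C1, 0 <= C2 &
  forall dA db dc d xs, 0 <= d -> d <= eps0c ->
  opnorm dA <= d -> norm2 db <= d -> norm2 dc <= d ->
  sol_set K (A + dA) (b + db) (c + dc) xs ->
  `|eps_opt K A b c xs| <= C1 * d /\ norm2 (A *m xs - b) <= C2 * d].
Proof.
have Eg : 0 <= E by rewrite /E; pos.
have Dg : 0 <= norm2 c * D'.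
  by rewrite /D'; apply: mulr_ge0; [exact: norm2_ge0| pos; rewrite /Cres; pos].
exists (Num.max E (norm2 c * D')), Cres; split.
- by rewrite le_max Eg.
- by rewrite /Cres; pos.
move=> dA db dc d xs d0 de hA hb hc sxs.
have hu := upD d0 de hA hb hc sxs.
have hl := lowE d0 de hA hb hc sxs.
split.
  rewrite /eps_opt -/pstar ler_norml; apply/andP; split.
    have : norm2 c * D' * d <= Num.max E (norm2 c * D') * d.
      by apply: ler_wpM2r => //; rewrite le_max lexx orbT.
    lra.
  have : E * d <= Num.max E (norm2 c * D') * d.
    by apply: ler_wpM2r => //; rewrite le_max lexx.
  lra.
have [xt0 [fxt0 hxt0]] := feasD K_x0 Ax0 R2ge d0 de hA hb.
case: sxs => fxs oxs.
have nxs := boundB d0 de hA hb hc fxt0 hxt0 fxs (oxs xt0 fxt0).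
exact: resC d0 hA hb fxs.1 nxs.
Qed.

End Cone.

Unset Implicit Arguments.

Theorem theorem2 (R : realType) (m n : nat) (K : set 'cV[R]_n)
  (A : 'M[R]_(m, n)) (b : 'cV[R]_m) (c : 'cV[R]_n) :
  proper_cone K ->
  (forall y : 'cV[R]_m, exists x : 'cV[R]_n, A *m x = y) ->
  (exists x0, interior2 K x0 /\ A *m x0 = b) ->
  (exists y0 : 'cV[R]_m, interior2 (dual_cone K) (c - A^T *m y0)) ->
  exists eps0 : R, 0 < eps0 /\
  forall eps : R, 0 < eps -> eps <= eps0 ->
  exists cbar : R,
    (forall (dA : 'M[R]_(m, n)) (db : 'cV[R]_m) (dc : 'cV[R]_n),
       opnorm dA + norm2 db + norm2 dc <= eps ->
       forall xs, sol_set K (A + dA) (b + db) (c + dc) xs ->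
         Num.max (eps_opt K A b c xs) (norm2 (A *m xs - b))
           <= cbar * (opnorm dA + norm2 db + norm2 dc)) /\
    (forall (c1 c2 c3 p : R), 0 <= c1 -> 0 <= c2 -> 0 <= c3 -> 0 < p ->
       (forall x : 'cV[R]_n,
          (dist_pt x (sol_set K A b c) `^ p <=
            (c1 * `|eps_opt K A b c x| + c2 * norm2 (A *m x - b)
             + c3 * norm2 (xminus K x))%:E)%E) ->
       exists c1' c2' c3' : R, [/\ 0 <= c1', 0 <= c2', 0 <= c3' &
         forall (dA : 'M[R]_(m, n)) (db : 'cV[R]_m) (dc : 'cV[R]_n),
           opnorm dA + norm2 db + norm2 dc <= eps ->
           (dist_set (sol_set K A b c) (sol_set K (A + dA) (b + db) (c + dc)) `^ p
             <= (c1' * norm2 dc + c2' * opnorm dA + c3' * norm2 db)%:E)%E]).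
Proof.
move=> hK hs [x0 [[r0 r0p hx0] Ax0]] [y0 [r1 r1p hy0]].
have [B AB] := right_inv hs.
have [beta [beta0 hB]] := mx_bound B.
have [C1 [C2 [C10 C20 HC]]] := main_in hK r0p hx0 Ax0 r1p hy0 AB beta0 hB.
exists (eps0c b c x0 r0 y0 r1 beta); split; first exact: eps0c_gt0.
move=> eps ep ee.
have hdd (dA : 'M[R]_(m, n)) (db : 'cV[R]_m) (dc : 'cV[R]_n) : opnorm dA + norm2 db + norm2 dc <= eps ->
  [/\ 0 <= opnorm dA + norm2 db + norm2 dc,
      opnorm dA + norm2 db + norm2 dc <= eps0c b c x0 r0 y0 r1 beta,
      opnorm dA <= opnorm dA + norm2 db + norm2 dc,
      norm2 db <= opnorm dA + norm2 db + norm2 dc &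
      norm2 dc <= opnorm dA + norm2 db + norm2 dc].
  move=> h; have := opnorm_ge0 dA; have := norm2_ge0 db; have := norm2_ge0 dc.
  move=> h1 h2 h3; split; try lra; exact: le_trans ee.
exists (Num.max C1 C2); split.
  move=> dA db dc h xs sxs.
  have [d0 de h1 h2 h3] := hdd dA db dc h.
  have [e1 e2] := HC _ _ _ _ _ d0 de h1 h2 h3 sxs.
  rewrite ge_max; apply/andP; split.
    apply: le_trans (ler_norm _) _; apply: le_trans e1 _.
    by apply: ler_wpM2r => //; rewrite le_max lexx.
  apply: le_trans e2 _.
  by apply: ler_wpM2r => //; rewrite le_max lexx orbT.
move=> c1 c2 c3 p c10 c20 c30 pp hdist.
pose K0 := c1 * C1 + c2 * C2.
have K00 : 0 <= K0 by rewrite /K0 addr_ge0 // mulr_ge0.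
exists K0, K0, K0; split => // dA db dc h.
have [d0 de h1 h2 h3] := hdd dA db dc h.
have [xs sxs] := existF hK r0p hx0 Ax0 r1p hy0 AB beta0 hB d0 de h1 h2 h3.
have [e1 e2] := HC _ _ _ _ _ d0 de h1 h2 h3 sxs.
have Kxs : K xs by case: sxs => -[].
have hx := hdist xs.
rewrite /xminus projK_in // subrr norm2_0 mulr0 addr0 in hx.
set d := opnorm dA + norm2 db + norm2 dc in e1 e2 d0 de h1 h2 h3.
have hr : c1 * `|eps_opt K A b c xs| + c2 * norm2 (A *m xs - b)
    <= c1 * norm2 dc + c2 * opnorm dA + c3 * norm2 db + (K0 * d - (c1 * norm2 dc + c2 * opnorm dA + c3 * norm2 db)).
  rewrite addrCA subrr addr0 /K0.
  have := ler_wpM2l c10 e1; have := ler_wpM2l c20 e2; lra.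
have eK : c1 * norm2 dc + c2 * opnorm dA + c3 * norm2 db + (K0 * d - (c1 * norm2 dc + c2 * opnorm dA + c3 * norm2 db)) = K0 * norm2 dc + K0 * opnorm dA + K0 * norm2 db.
  rewrite /d; ring.
rewrite eK in hr.
have dsd : (dist_set (sol_set K A b c) (sol_set K (A + dA) (b + db) (c + dc))
            <= dist_pt xs (sol_set K A b c))%E.
  apply: le_ereal_inf_tmp => _ [z hz <-].
  apply: ereal_inf_lbound; exists z => //; exists xs => //.
  by rewrite norm2B.
have ds0 : (0 <= dist_set (sol_set K A b c) (sol_set K (A + dA) (b + db) (c + dc)))%E.
  apply: le_ereal_inf_tmp => _ [x hx' [y hy <-]]; rewrite lee_fin; exact: norm2_ge0.
have dp0 : (0 <= dist_pt xs (sol_set K A b c))%E.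
  apply: le_ereal_inf_tmp => _ [z hz <-]; rewrite lee_fin; exact: norm2_ge0.
apply: le_trans (gt0_ler_poweR (ltW pp) _ _ dsd) _.
- by rewrite in_itv /= ds0 leey.
- by rewrite in_itv /= dp0 leey.
apply: le_trans hx _; rewrite lee_fin; exact: hr.
Qed.
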